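(* Let $\iota:\emptyset\to\{\bullet\}$, let $M:D\to E$ be the map with $D=\{x,y,z,c\}$ having open sets $\emptyset,\{x,y,z\},D$, $E=\{u,v\}$ antidiscrete, $M(x)=M(y)=u$, $M(z)=M(c)=v$, and let $k:\{\bullet\}\to S$ send the point to the closed point $c$ of the Sierpinski space $S=\{o,c\}$ (open sets $\emptyset,\{o\},S$). Then, in $\mathrm{Top}$, $\{\iota\}^{rllrrl}=\{M\}^l=\{k\}^{lr}$, and this is the class of closed subspace embeddings.
   Context: For continuous maps $f:A\to B$, $g:C\to D'$, $f\pitchfork g$ means: for all continuous $t:A\to C$, $b:B\to D'$ with $g\circ t=b\circ f$ there is continuous $d:B\to C$ with $d\circ f=t$, $g\circ d=b$. For a class $P$, $P^l=\{f: f\pitchfork g\ \forall g\in P\}$, $P^r=\{g: f\pitchfork g\ \forall f\in P\}$; for a word $w$ in $l,r$, $P^w$ applies these operations from left to right. *)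

(* Defs.v *)
From HB Require Import structures.
From mathcomp Require Import all_boot all_order all_algebra.
From mathcomp Require Import all_classical all_reals all_analysis.

Set Implicit Arguments.
Unset Strict Implicit.
Unset Printing Implicit Defensive.
Local Open Scope classical_set_scope.

Definition chain_op (T : Type) (U : set T) : set_system T :=
  fun V => V = set0 \/ V = U \/ V = setT.

Lemma chain_opT (T : Type) (U : set T) : chain_op U setT.
Proof. by right; right. Qed.

Lemma chain_opI (T : Type) (U : set T) : setI_closed (chain_op U).
Proof.
move=> A B [->|[->|->]] [->|[->|->]];
  rewrite ?set0I ?setI0 ?setIid ?setTI ?setIT; rewrite /chain_op; tauto.
Qed.

Lemma chain_op_bigU (T : Type) (U : set T) (I : Type) (f : I -> set T) :
  (forall i, chain_op U (f i)) -> chain_op U (\bigcup_i f i).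
Proof.
move=> hf.
have [[i fiT]|nT] := pselect (exists i, f i = setT).
  right; right; apply/seteqP; split=> // x _; exists i => //; by rewrite fiT.
have [[i fiU]|nU] := pselect (exists i, f i = U).
  right; left; apply/seteqP; split.
    move=> x [j _ fjx]; case: (hf j) => [fj0|[fjU|fjT]].
    - by rewrite fj0 in fjx.
    - by rewrite fjU in fjx.
    - by exfalso; apply: nT; exists j.
  by move=> x Ux; exists i => //; rewrite fiU.
left; apply/seteqP; split=> // x [j _ fjx]; case: (hf j) => [fj0|[fjU|fjT]].
- by rewrite fj0 in fjx.
- by exfalso; apply: nU; exists j.
- by exfalso; apply: nT; exists j.
Qed.

Inductive Dpt := Dx | Dy | Dz | Dc.
Definition Dpt_to (p : Dpt) : nat := match p with Dx => 0 | Dy => 1 | Dz => 2 | Dc => 3 end%N.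
Definition Dpt_of (n : nat) : Dpt := match n with 0 => Dx | 1 => Dy | 2 => Dz | _ => Dc end%N.
Lemma Dpt_K : cancel Dpt_to Dpt_of. Proof. by case. Qed.
HB.instance Definition _ := Countable.copy Dpt (can_type Dpt_K).
HB.instance Definition _ := isOpenTopological.Build Dpt
  (@chain_opT _ [set p | p <> Dc]) (@chain_opI _ _) (@chain_op_bigU _ _).

Inductive Pt := bullet.
Definition Pt_to (_ : Pt) : nat := 0%N.
Definition Pt_of (_ : nat) : Pt := bullet.
Lemma Pt_K : cancel Pt_to Pt_of. Proof. by case. Qed.
HB.instance Definition _ := Countable.copy Pt (can_type Pt_K).
HB.instance Definition _ := isOpenTopological.Build Pt
  (@chain_opT _ set0) (@chain_opI _ _) (@chain_op_bigU _ _).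

Inductive Emp : Type := .
Definition Emp_to (e : Emp) : nat := match e with end.
Definition Emp_of (_ : nat) : option Emp := None.
Lemma Emp_K : pcancel Emp_to Emp_of. Proof. by case. Qed.
HB.instance Definition _ := Countable.copy Emp (pcan_type Emp_K).
HB.instance Definition _ := isOpenTopological.Build Emp
  (@chain_opT _ set0) (@chain_opI _ _) (@chain_op_bigU _ _).

Inductive Ept := Eu | Ev.
Definition Ept_to (p : Ept) : nat := match p with Eu => 0 | Ev => 1 end%N.
Definition Ept_of (n : nat) : Ept := match n with 0 => Eu | _ => Ev end%N.
Lemma Ept_K : cancel Ept_to Ept_of. Proof. by case. Qed.
HB.instance Definition _ := Countable.copy Ept (can_type Ept_K).
HB.instance Definition _ := isOpenTopological.Build Ept
  (@chain_opT _ set0) (@chain_opI _ _) (@chain_op_bigU _ _).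

Inductive Spt := So | Sc.
Definition Spt_to (p : Spt) : nat := match p with So => 0 | Sc => 1 end%N.
Definition Spt_of (n : nat) : Spt := match n with 0 => So | _ => Sc end%N.
Lemma Spt_K : cancel Spt_to Spt_of. Proof. by case. Qed.
HB.instance Definition _ := Countable.copy Spt (can_type Spt_K).
HB.instance Definition _ := isOpenTopological.Build Spt
  (@chain_opT _ [set So]) (@chain_opI _ _) (@chain_op_bigU _ _).

Lemma open_DptE : @open Dpt = chain_op [set p | p <> Dc]. Proof. by []. Qed.
Lemma open_EptE : @open Ept = chain_op set0. Proof. by []. Qed.
Lemma open_SptE : @open Spt = chain_op [set So]. Proof. by []. Qed.
Lemma open_PtE : @open Pt = chain_op set0. Proof. by []. Qed.

Definition iota_map (e : Emp) : Pt := match e with end.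
Definition Mmap (p : Dpt) : Ept :=
  match p with Dx | Dy => Eu | Dz | Dc => Ev end.
Definition kmap (_ : Pt) : Spt := Sc.

Definition mclass := forall (A B : topologicalType), (A -> B) -> Prop.

Definition lifts (A B C D : topologicalType) (f : A -> B) (g : C -> D) : Prop :=
  forall (t : A -> C) (b : B -> D), continuous t -> continuous b ->
    g \o t = b \o f ->
    exists d : B -> C, [/\ continuous d, d \o f = t & g \o d = b].

Definition lorth (P : mclass) : mclass := fun A B f =>
  continuous f /\ forall (C D : topologicalType) (g : C -> D), P C D g -> lifts f g.
Definition rorth (P : mclass) : mclass := fun C D g =>
  continuous g /\ forall (A B : topologicalType) (f : A -> B), P A B f -> lifts f g.

Definition single (X Y : topologicalType) (h : X -> Y) : mclass := fun A B f =>
  existT (fun AB : topologicalType * topologicalType => AB.1 -> AB.2) (A, B) f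
  = existT (fun AB : topologicalType * topologicalType => AB.1 -> AB.2) (X, Y) h.

Definition same_class (P Q : mclass) : Prop :=
  forall (A B : topologicalType) (f : A -> B), P A B f <-> Q A B f.

Definition closed_embedding : mclass := fun A B f =>
  [/\ continuous f, injective f, closed (range f) &
      forall U : set A, open U -> exists V : set B, open V /\ U = f @^-1` V].

(* Main.v *)
Require Import Defs.
From HB Require Import structures.
From mathcomp Require Import all_boot all_classical all_analysis.
Set Implicit Arguments. Unset Strict Implicit. Unset Printing Implicit Defensive.
Local Open Scope classical_set_scope.

Definition ctop (T : Type) (op : set_system T) (H1 : op setT) (H2 : setI_closed op)
  (H3 : forall (I : Type) (f : I -> set T), (forall i, op (f i)) -> op (\bigcup_i f i)) : Type := T.
Section Ctop.
Variables (T : Type) (op : set_system T) (H1 : op setT) (H2 : setI_closed op)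
  (H3 : forall (I : Type) (f : I -> set T), (forall i, op (f i)) -> op (\bigcup_i f i)).
HB.instance Definition _ := gen_eqMixin (ctop H1 H2 H3).
HB.instance Definition _ := gen_choiceMixin (ctop H1 H2 H3).
HB.instance Definition _ := isOpenTopological.Build (ctop H1 H2 H3) H1 H2 H3.
Lemma ctop_openE : @open (ctop H1 H2 H3) = op. Proof. by []. Qed.
End Ctop.

Lemma single_l (X Y : topologicalType) (h : X -> Y) (A B : topologicalType) (f : A -> B) :
  @lorth (single h) A B f <-> continuous f /\ lifts f h.
Proof.
split=> [[cf H]|[cf H]]; first by split=> //; apply: H.
split=> // C D g; rewrite /single.
set s := existT _ _ g => E.
have : forall s' : {AB : topologicalType * topologicalType & AB.1 -> AB.2},
  s' = existT _ (X, Y) h -> lifts f (projT2 s') by move=> s' ->.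
by move=> /(_ s E).
Qed.

Lemma single_r (X Y : topologicalType) (h : X -> Y) (A B : topologicalType) (f : A -> B) :
  @rorth (single h) A B f <-> continuous f /\ lifts h f.
Proof.
split=> [[cf H]|[cf H]]; first by split=> //; apply: H.
split=> // C D g; rewrite /single.
set s := existT _ _ g => E.
have : forall s' : {AB : topologicalType * topologicalType & AB.1 -> AB.2},
  s' = existT _ (X, Y) h -> lifts (projT2 s') f by move=> s' ->.
by move=> /(_ s E).
Qed.

Lemma cont_from_Pt (T : topologicalType) (f : Pt -> T) : continuous f.
Proof.
apply/continuousP => A _; case: (pselect (A (f bullet))) => h.
  by right; right; apply/seteqP; split=> // -[].
by left; apply/seteqP; split=> // -[].
Qed.

Lemma cont_from_Emp (T : topologicalType) (f : Emp -> T) : continuous f.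
Proof.
apply/continuousP => A _; left; apply/seteqP; split=> // -[].
Qed.

Lemma cont_to_Ept (T : topologicalType) (f : T -> Ept) : continuous f.
Proof.
apply/continuousP => A [->|[->|->]]; rewrite ?preimage_set0 ?preimage_setT;
  [exact: open0|exact: open0|exact: openT].
Qed.

Lemma cont_to_Dpt (T : topologicalType) (f : T -> Dpt) :
  open (f @^-1` [set p | p <> Dc]) -> continuous f.
Proof.
move=> H; apply/continuousP => A [->|[->|->]]; rewrite ?preimage_set0 ?preimage_setT //;
  [exact: open0|exact: openT].
Qed.

Lemma cont_to_Spt (T : topologicalType) (f : T -> Spt) :
  open (f @^-1` [set So]) -> continuous f.
Proof.
move=> H; apply/continuousP => A [->|[->|->]]; rewrite ?preimage_set0 ?preimage_setT //;
  [exact: open0|exact: openT].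
Qed.

Lemma Dpt_open_ne (T : topologicalType) (f : T -> Dpt) :
  continuous f -> open (f @^-1` [set p | p <> Dc]).
Proof. by move/continuousP; apply; right; left. Qed.

Lemma Spt_open_o (T : topologicalType) (f : T -> Spt) :
  continuous f -> open (f @^-1` [set So]).
Proof. by move/continuousP; apply; right; left. Qed.
Lemma CE_liftsM (A B : topologicalType) (f : A -> B) :
  @closed_embedding A B f -> lifts f Mmap.
Proof.
move=> [cf injf clf opf] t b ct cb e.
have ef a : Mmap (t a) = b (f a) by exact: (congr1 (fun F => F a) e).
pose d y := if pselect (exists a, f a = y) is left H then t (projT1 (cid H))
  else (if b y == Eu then Dx else Dz).
have dE a : d (f a) = t a.
  rewrite /d; case: pselect => [H|H]; last by exfalso; apply: H; exists a.
  by case: cid => a' /= /injf ->.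
exists d; split.
- apply: cont_to_Dpt.
  have [V [oV eV]] := opf _ (Dpt_open_ne ct).
  have -> : d @^-1` [set p | p <> Dc] = ~` (range f `&` ~` V).
    apply/seteqP; split=> y /=.
      move=> dy [[a _ fay] nV]; apply: nV; rewrite -fay.
      have : (t @^-1` [set p | p <> Dc]) a by rewrite /= -dE fay.
      by rewrite eV.
    move=> H; rewrite /d; case: pselect => [H1|_]; last by case: (b y == Eu).
    case: cid => a /= fay.
    have : (f @^-1` V) a.
      rewrite /= fay; apply: contrapT => nV; apply: H; split=> //; by exists a.
    by rewrite -eV.
  apply: closed_openC; apply: closedI => //; exact: open_closedC.
- by apply/funext => a /=; rewrite dE.
- apply/funext => y /=; rewrite /d; case: pselect => [H|_].
    by case: cid => a /= <-; rewrite ef.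
  by case: (b y).
Qed.

Lemma liftsM_CE (A B : topologicalType) (f : A -> B) :
  continuous f -> lifts f Mmap -> @closed_embedding A B f.
Proof.
move=> cf L; split=> //.
- move=> a1 a2 e12.
  pose t a := if a == a1 then Dx else Dy.
  have ct : continuous t.
    apply: cont_to_Dpt; rewrite (_ : _ @^-1` _ = setT); first exact: openT.
    by apply/seteqP; split=> // a _ /=; rewrite /t; case: (a == a1).
  have [|d [cd df Md]] := L t (fun _ => Eu) ct (@cont_to_Ept _ _).
    by apply/funext => a /=; rewrite /t; case: (a == a1).
  have h1 : d (f a1) = Dx by rewrite -/((d \o f) a1) df /t eqxx.
  have h2 : d (f a2) = t a2 by rewrite -/((d \o f) a2) df.
  move: h2; rewrite -e12 h1 /t; case: eqP => //.
- pose t (a : A) := Dc.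
  pose b y := if `[< range f y >] then Ev else Eu.
  have ct : continuous t by exact: cst_continuous.
  have [|d [cd df Md]] := L t b ct (@cont_to_Ept _ _).
    apply/funext => a /=; rewrite /b asboolT //; by exists a.
  have -> : range f = ~` (d @^-1` [set p | p <> Dc]).
    apply/seteqP; split=> y /=.
      by move=> [a _ <-]; rewrite -/((d \o f) a) df.
    move=> /contrapT dy; have := congr1 (fun F => F y) Md => /=.
    by rewrite dy /b; case: asboolP.
  exact/open_closedC/Dpt_open_ne.
- move=> U oU.
  pose t a := if `[< U a >] then Dz else Dc.
  have ct : continuous t.
    apply: cont_to_Dpt; rewrite (_ : _ @^-1` _ = U) //.
    by apply/seteqP; split=> a /=; rewrite /t; case: asboolP.
  have [|d [cd df Md]] := L t (fun _ => Ev) ct (@cont_to_Ept _ _).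
    by apply/funext => a /=; rewrite /t; case: asboolP.
  exists (d @^-1` [set p | p <> Dc]); split; first exact: Dpt_open_ne.
  apply/seteqP; split=> a /=; rewrite -/((d \o f) a) df /t; case: asboolP => //.
Qed.

Definition dense_map (A B : topologicalType) (f : A -> B) :=
  forall V : set B, open V -> (forall a, ~ V (f a)) -> V = set0.

Lemma lifts_k_dense (A B : topologicalType) (f : A -> B) :
  lifts f kmap -> dense_map f.
Proof.
move=> L V oV dV.
pose b y := if `[< V y >] then So else Sc.
have cb : continuous b.
  apply: cont_to_Spt; rewrite (_ : _ @^-1` _ = V) //.
  by apply/seteqP; split=> y /=; rewrite /b; case: asboolP.
have [|d [_ _ kd]] := L (fun _ => bullet) b (@cst_continuous _ _ _) cb.
  by apply/funext => a /=; rewrite /b asboolF //; exact: dV.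
apply/seteqP; split=> // y Vy; have := congr1 (fun F => F y) kd.
by rewrite /= /kmap /b asboolT.
Qed.

Lemma dense_lifts_k (A B : topologicalType) (f : A -> B) :
  dense_map f -> lifts f kmap.
Proof.
move=> D t b ct cb e.
have bS : forall y, b y = Sc.
  have V0 : b @^-1` [set So] = set0.
    apply: D; first exact: Spt_open_o.
    move=> a /=; have := congr1 (fun F => F a) e => /= <-; by [].
  move=> y; case E : (b y) => //.
  have : (b @^-1` [set So]) y by [].
  by rewrite V0.
exists (fun _ => bullet); split.
- exact: cst_continuous.
- by apply/funext => a; case: (t a).
- by apply/funext => y /=; rewrite bS.
Qed.

Lemma CE_lifts_dense (C D : topologicalType) (g : C -> D) :
  @closed_embedding C D g ->
  forall (A B : topologicalType) (f : A -> B), dense_map f -> lifts f g.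
Proof.
move=> [cg injg clg opg] A B f df t b ct cb e.
have ef a : g (t a) = b (f a) by exact: (congr1 (fun F => F a) e).
have inr : forall y, exists c, g c = b y.
  have V0 : b @^-1` (~` range g) = set0.
    apply: df; first by move/continuousP: cb; apply; exact: closed_openC.
    by move=> a /=; apply; exists (t a).
  move=> y; apply: contrapT => ny.
  have : (b @^-1` (~` range g)) y by move=> [c _ gc]; apply: ny; exists c.
  by rewrite V0.
pose d y := projT1 (cid (inr y)).
have gd y : g (d y) = b y by rewrite /d; case: cid.
exists d; split.
- apply/continuousP => U oU; have [V [oV ->]] := opg U oU.
  rewrite (_ : _ @^-1` _ = b @^-1` V); first by move/continuousP: cb; apply.
  by apply/seteqP; split=> y /=; rewrite gd.
- by apply/funext => a /=; apply: injg; rewrite gd ef.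
- by apply/funext => y /=; rewrite gd.
Qed.

Definition bd := @ctop bool (fun _ => True) I (fun _ _ _ _ => I) (fun _ _ _ => I).

Lemma cont_from_bd (T : topologicalType) (f : bd -> T) : continuous f.
Proof. by apply/continuousP. Qed.

Lemma lifts_dense_CE (C D : topologicalType) (g : C -> D) : continuous g ->
  (forall (A B : topologicalType) (f : A -> B), continuous f -> dense_map f -> lifts f g) ->
  @closed_embedding C D g.
Proof.
move=> cg L; split=> //.
- move=> c1 c2 e12.
  pose t (x : bd) := if x then c1 else c2.
  have [||d [cd df gd]] := L bd Pt (fun _ => bullet) (@cont_from_bd _ _) _ t (fun _ => g c1)
    (@cont_from_bd _ _) (@cst_continuous _ _ _).
  + move=> V oV nV; apply/seteqP; split=> // -[] Vb; exact: (nV true).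
  + by apply/funext => -[]; rewrite /t /= ?e12.
  have := congr1 (fun F => F true) df; have := congr1 (fun F => F false) df.
  by rewrite /= /t => -> ->.
- move=> y Ky.
  pose K := closure (range g).
  have Kg c : K (g c) by apply: subset_closure; exists c.
  pose f (c : C) : K := SigSub (mem_set (Kg c)).
  have cf : continuous f.
    apply/continuousP => U [V oV <-].
    by move/continuousP: cg; apply.
  have csv : continuous (set_val : K -> D).
    by apply/continuousP => V oV; exists V.
  have [||d [cd df gd]] := L C K f cf _ id set_val (ltac:(by apply/continuousP) : continuous (id : C -> C)) csv.
  + move=> U [V oV <-] nU; apply/seteqP; split=> // x /= Vx.
    have Kx : K (val x) := set_valP x.
    have [z [[c _ <-] Vgc]] := Kx V (open_nbhs_nbhs (conj oV Vx)).
    exact: (nU c).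
  + by apply/funext.
  exists (d (SigSub (mem_set Ky))) => //.
  exact: (congr1 (fun F => F (SigSub (mem_set Ky))) gd).
- move=> U oU.
  have cf : continuous (id : C -> initial_topology g).
    apply/continuousP => W [V oV <-].
    by move/continuousP: cg; apply.
  have [||d [cd df gd]] := L C (initial_topology g) id cf _ id (g : initial_topology g -> D)
      (ltac:(by apply/continuousP) : continuous (id : C -> C)) (@initial_continuous _ _ g).
  + move=> W _ nW; apply/seteqP; split=> // x Wx; exact: (nW x).
  + by apply/funext.
  have dE x : d x = x := congr1 (fun F => F x) df.
  move/continuousP: cd => /(_ U oU) [V oV e].
  exists V; split => //; rewrite e; by apply/seteqP; split => x /=; rewrite dE.
Qed.
Definition Qc := lorth (lorth (rorth (single iota_map))).
Definition Xc := rorth Qc.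

Lemma rorth_iota_surj (C D : topologicalType) (g : C -> D) :
  @rorth (single iota_map) C D g -> forall y, exists c, g c = y.
Proof.
move=> /single_r [cg L] y.
have [|d [_ _ gd]] := L (fun e : Emp => match e with end) (fun _ : Pt => y)
  (@cont_from_Emp _ _) (@cont_from_Pt _ _).
  by apply/funext => -[].
by exists (d bullet); exact: (congr1 (fun F => F bullet) gd).
Qed.

Definition jmap (_ : Pt) : bd := false.

Lemma j_in : @lorth (rorth (single iota_map)) Pt bd jmap.
Proof.
split; first exact: cont_from_Pt.
move=> C D g /rorth_iota_surj sg t b ct cb e.
have [c gc] := sg (b true).
exists (fun x : bd => if x then c else t bullet); split.
- exact: cont_from_bd.
- by apply/funext => -[].
- apply/funext => -[] //=.
  have := congr1 (fun F => F bullet) e => /= ->; by [].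
Qed.

Lemma Q_clopen (A B : topologicalType) (f : A -> B) : @Qc A B f ->
  forall W : set B, open W -> closed W -> (forall a, ~ W (f a)) -> W = set0.
Proof.
move=> [cf H] W oW cW nW.
have L := H _ _ _ j_in.
pose b y : bd := `[< W y >].
have cb : continuous b.
  apply/continuousP => S _.
  have oWc : open (~` W) by exact: closed_openC.
  case: (pselect (S true)) => St; case: (pselect (S false)) => Sf.
  - rewrite (_ : _ @^-1` _ = setT); first exact: openT.
    by apply/seteqP; split=> // y _ /=; rewrite /b; case: asboolP.
  - rewrite (_ : _ @^-1` _ = W) //.
    by apply/seteqP; split=> y /=; rewrite /b; case: asboolP.
  - rewrite (_ : _ @^-1` _ = ~` W) //.
    by apply/seteqP; split=> y /=; rewrite /b; case: asboolP.
  - rewrite (_ : _ @^-1` _ = set0); first exact: open0.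
    by apply/seteqP; split=> // y /=; rewrite /b; case: asboolP.
have [|d [_ _ jd]] := L (fun _ => bullet) b (@cst_continuous _ _ _) cb.
  by apply/funext => a /=; rewrite /jmap /b asboolF //; exact: nW.
apply/seteqP; split=> // y Wy.
have := congr1 (fun F => F y) jd; by rewrite /= /jmap /b asboolT.
Qed.
Section SumSp.
Variables (A : topologicalType) (B : Type).
Definition sum_op : set_system (A + B)%type := fun U => open (fun a => U (inl a)).
Lemma sum_opT : sum_op setT. Proof. exact: openT. Qed.
Lemma sum_opI : setI_closed sum_op. Proof. by move=> U V oU oV; exact: openI. Qed.
Lemma sum_opU (I : Type) (F : I -> set (A + B)%type) :
  (forall i, sum_op (F i)) -> sum_op (\bigcup_i F i).
Proof. by move=> H; apply: bigcup_open => i _; exact: H. Qed.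
Definition sumsp := ctop sum_opT sum_opI sum_opU.
End SumSp.

Lemma clopen_Q (A B : topologicalType) (f : A -> B) : continuous f ->
  (forall W : set B, open W -> closed W -> (forall a, ~ W (f a)) -> W = set0) ->
  @Qc A B f.
Proof.
move=> cf HW; split=> // A' B' g' [cg' Hg'].
pose p (s : sumsp A' B') : B' := match s with inl a => g' a | inr y => y end.
have cp : continuous p.
  apply/continuousP => V oV; move/continuousP: cg' => /(_ V oV); by [].
have Hp : @rorth (single iota_map) _ _ p.
  apply/single_r; split=> // t b _ _ _.
  exists (fun _ => inr (b bullet) : sumsp A' B'); split.
  - exact: cont_from_Pt.
  - by apply/funext => -[].
  - by apply/funext => -[].
have cinl : continuous (inl : A' -> sumsp A' B').
  by apply/continuousP => U oU; exact: oU.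
have [|d0 [cd0 d0g pd0]] := Hg' _ _ p Hp inl id cinl
  (ltac:(by apply/continuousP) : continuous (id : B' -> B')).
  by apply/funext.
move=> t b ct cb e.
pose Wsp : set (sumsp A' B') := [set s | if s is inr _ then True else False].
have oWsp : open Wsp by exact: open0.
have cWsp : closed Wsp.
  rewrite -openC; rewrite (_ : ~` Wsp = [set s | if s is inl _ then True else False]).
    exact: openT.
  by apply/seteqP; split=> -[] ? /=; tauto.
pose W := b @^-1` (d0 @^-1` Wsp).
have W0 : W = set0.
  apply: HW.
  - by move/continuousP: cb; apply; move/continuousP: cd0; apply.
  - rewrite -openC /W !preimage_setC.
    by move/continuousP: cb; apply; move/continuousP: cd0; apply; rewrite openC.
  - move=> a; rewrite /W /=.
    have := congr1 (fun F => F a) e => /= <-.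
    by have := congr1 (fun F => F (t a)) d0g => /= ->.
have ex y : exists a, d0 (b y) = inl a.
  case E : (d0 (b y)) => [a|z]; first by exists a.
  have : W y by rewrite /W /= E.
  by rewrite W0.
pose d y := projT1 (cid (ex y)).
have dE y : d0 (b y) = inl (d y) by rewrite /d; case: cid.
exists d; split.
- apply/continuousP => U oU.
  pose IU : set (sumsp A' B') := [set s | if s is inl a then U a else False].
  have oIU : open IU by exact: oU.
  rewrite (_ : _ @^-1` _ = b @^-1` (d0 @^-1` IU)).
    by move/continuousP: cb; apply; move/continuousP: cd0; apply.
  by apply/seteqP; split=> y /=; rewrite dE.
- apply/funext => a /=.
  have := dE (f a); have := congr1 (fun F => F a) e => /= <-.
  by have := congr1 (fun F => F (t a)) d0g => /= -> [].
- apply/funext => y /=.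
  have := congr1 (fun F => F (b y)) pd0 => /=; rewrite dE; by [].
Qed.
Lemma open_ptwise (T : topologicalType) (A : set T) :
  (forall x, A x -> exists B, [/\ open B, B x & B `<=` A]) -> open A.
Proof.
move=> H; rewrite openE => x Ax; have [B [oB Bx BA]] := H x Ax.
apply: (filterS BA); exact: open_nbhs_nbhs.
Qed.

Section Big.
Variables (B C : topologicalType) (R : set B).
Definition Nn := ((B * set C) * nat) -> Prop.
Definition small (S : set Nn) := exists e : nat -> Nn, S `<=` range e.
Definition opK (N : set (option Nn)) :=
  N None -> exists S, small S /\ forall n, ~ S n -> N (Some n).
Definition Pd (q : B * option Nn) := q.2 = None -> R q.1.
Definition dop : set_system (B * option Nn) := fun U => forall p, U p -> Pd p ->
  exists U1 N, [/\ open U1, opK N, U1 p.1, N p.2 &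
    forall q, Pd q -> U1 q.1 -> N q.2 -> U q].

Lemma small0 : small set0.
Proof. by exists (fun _ _ => True). Qed.

Lemma small1 n : small [set m | m = n].
Proof. by exists (fun _ => n) => m ->; exists 0%N. Qed.

Lemma smallU S1 S2 : small S1 -> small S2 -> small (S1 `|` S2).
Proof.
move=> [e1 H1] [e2 H2].
exists (fun n => if odd n then e2 n./2 else e1 n./2) => x [/H1|/H2] [m _ <-].
  by exists m.*2 => //; rewrite odd_double doubleK.
by exists m.*2.+1 => //=; rewrite odd_double /= uphalf_double.
Qed.

Lemma opKT : opK setT.
Proof. by move=> _; exists set0; split=> //; exact: small0. Qed.

Lemma dopT : dop setT.
Proof.
move=> p _ _; exists setT, setT; split=> //; [exact: openT|exact: opKT].
Qed.

Lemma dopI : setI_closed dop.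
Proof.
move=> U V oU oV p [Up Vp] Pp.
have [U1 [N1 [oU1 oN1 U1p N1p H1]]] := oU p Up Pp.
have [U2 [N2 [oU2 oN2 U2p N2p H2]]] := oV p Vp Pp.
exists (U1 `&` U2), (N1 `&` N2); split=> //.
- exact: openI.
- move=> [/oN1 [S1 [s1 HS1]] /oN2 [S2 [s2 HS2]]].
  exists (S1 `|` S2); split; first exact: smallU.
  by move=> n nS; split; [apply: HS1|apply: HS2] => ?; apply: nS; [left|right].
- by move=> q Pq [] ? ? [] ? ?; split; [apply: H1|apply: H2].
Qed.

Lemma dopU (I : Type) (F : I -> set (B * option Nn)) :
  (forall i, dop (F i)) -> dop (\bigcup_i F i).
Proof.
move=> H p [i _ Fip] Pp.
have [U1 [N [oU1 oN U1p Np H1]]] := H i p Fip Pp.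
exists U1, N; split=> // q Pq U1q Nq; exists i => //; exact: H1.
Qed.

Definition Dsp := ctop dopT dopI dopU.

Lemma dop_fst (V : set B) : open V -> dop [set q | V q.1].
Proof.
move=> oV p Vp _; exists V, setT; split=> //; exact: opKT.
Qed.
End Big.
Lemma X_CE (C D : topologicalType) (g : C -> D) : @Xc C D g -> @closed_embedding C D g.
Proof.
move=> [cg H]; apply: lifts_dense_CE => // A B f cf df; apply: H.
by apply: clopen_Q => // W oW _ nW; exact: df W oW nW.
Qed.

Lemma C1 (A B : topologicalType) (f : A -> B) :
  @lorth (rorth Xc) A B f -> @closed_embedding A B f.
Proof.
move=> [cf H]; apply: liftsM_CE => //; apply: H; split; first exact: cont_to_Ept.
by move=> C D g Xg; apply: CE_liftsM; exact: X_CE.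
Qed.

Lemma C2 (A B : topologicalType) (f : A -> B) :
  @closed_embedding A B f -> @lorth (rorth Xc) A B f.
Proof.
move=> CEf; have [cf injf clf opf] := CEf.
split=> // C D h [ch Hh] t b ct cb e.
pose R := range f.
pose T := Dsp C R.
pose g' (a : A) : T := (f a, None).
have Pg a : Pd R (g' a) by move=> _; exists a.
have cg' : continuous g'.
  apply/continuousP => U oU; apply: open_ptwise => a Ua.
  have [U1 [N [oU1 _ U1f NN Hq]]] := (oU : dop R U) _ Ua (Pg a).
  exists (f @^-1` U1); split=> //; first by move/continuousP: cf; apply.
  by move=> a' /= U1a'; apply: Hq => //; exact: Pg.
have Xg' : @Xc A T g'.
  split=> // A'' B'' f'' Qf'' t'' b'' ct'' cb'' e''.
  have ef a : g' (t'' a) = b'' (f'' a) by exact: (congr1 (fun F => F a) e'').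
  have s1 y : (b'' y).2 = None.
    case E : (b'' y).2 => [n|] //; exfalso.
    pose Kn : set T := [set q | q.2 = Some n].
    have oKn : open Kn.
      move=> p Kp _; exists setT, [set k | k = Some n]; split=> //; exact: openT.
    have cKn : closed Kn.
      rewrite -openC; suff HH : dop R (~` Kn) by exact: HH.
      move=> p nKp _; exists setT, [set k | k <> Some n]; split=> //.
      - exact: openT.
      - move=> _; exists [set m | m = n]; split; first exact: small1.
        by move=> m nm [/nm].
    have W0 := Q_clopen Qf'' (W := b'' @^-1` Kn).
    have : (b'' @^-1` Kn) y by [].
    rewrite W0 //.
    - by move/continuousP: cb''; apply.
    - rewrite -openC !preimage_setC; move/continuousP: cb''; apply.
      by rewrite openC.
    - by move=> a /=; rewrite -ef.
  have s2 y : R (b'' y).1.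
    apply: contrapT => nR.
    pose q0 := b'' y.
    pose K0 : set T := [set q | q = q0].
    have oK0 : open K0.
      move=> p -> Pp; exfalso; apply: nR; exact: Pp (s1 y).
    have cK0 : closed K0.
      rewrite -openC; suff HH : dop R (~` K0) by exact: HH.
      move=> p np _; exists setT, setT; split=> //.
      - exact: openT.
      - exact: opKT.
      - move=> q Pq _ _ Eq; apply: nR; rewrite /K0 /= in Eq; subst q.
        exact: Pq (s1 y).
    have W0 := Q_clopen Qf'' (W := b'' @^-1` K0).
    have : (b'' @^-1` K0) y by [].
    rewrite W0 //.
    - by move/continuousP: cb''; apply.
    - rewrite -openC !preimage_setC; move/continuousP: cb''; apply.
      by rewrite openC.
    - move=> a /=; rewrite -ef => E; apply: nR; have : R q0.1 by rewrite -E; exists (t'' a).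
      by [].
  have ex y : exists a, g' a = b'' y.
    have [a _ fa] := s2 y; exists a; move: (s1 y) fa; rewrite /g'.
    by case: (b'' y) => x k /= -> ->.
  pose d'' y := projT1 (cid (ex y)).
  have gd'' y : g' (d'' y) = b'' y by rewrite /d''; case: cid.
  exists d''; split.
  - apply/continuousP => U oU; have [V [oV ->]] := opf U oU.
    rewrite (_ : _ @^-1` _ = b'' @^-1` [set q : T | V q.1]).
      by move/continuousP: cb''; apply; exact: dop_fst.
    by apply/seteqP; split=> y /=; rewrite -gd''.
  - apply/funext => a /=; apply: injf; have := gd'' (f'' a); rewrite -ef; by case.
  - by apply/funext => y /=; exact: gd''.
have cb' : continuous (fun q : T => b q.1).
  apply/continuousP => V oV; have oV' : open (b @^-1` V) by move/continuousP: cb; apply.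
  exact: (@dop_fst B C R _ oV').
have [|d' [cd' d'g hd']] := Hh A T g' Xg' t (fun q : T => b q.1) ct cb'.
  by apply/funext => a; exact: (congr1 (fun F => F a) e).
pose good (x : B) (W : set C) (S : set (Nn B C)) := exists U1, [/\ open U1, U1 x &
  forall q : T, Pd R q -> U1 q.1 -> (q.2 = None \/ exists n, q.2 = Some n /\ ~ S n) ->
    W (d' q)].
pose Sof (i : (B * set C)%type) : set (Nn B C) :=
  if pselect (exists S, small S /\ good i.1 i.2 S) is left H then projT1 (cid H)
  else set0.
have Sof_small i : small (Sof i).
  rewrite /Sof; case: pselect => [H|_]; last exact: small0.
  by case: cid => S [].
have Sof_good i : (exists S, small S /\ good i.1 i.2 S) -> good i.1 i.2 (Sof i).
  move=> H; rewrite /Sof; case: pselect => [H'|//].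
  by case: cid => S [].
pose eof i : nat -> Nn B C := projT1 (cid (Sof_small i)).
have eofP i : Sof i `<=` range (eof i) by rewrite /eof; case: cid.
pose nstar : Nn B C := fun k => ~ eof k.1 k.2 k.
have nsP i : ~ Sof i nstar.
  move=> /eofP [m _ Em].
  have E' : nstar (i, m) = ~ nstar (i, m) by rewrite {1}/nstar /= Em.
  have nZ : ~ nstar (i, m) by move=> z; have := z; rewrite {1}E'; exact.
  have Z : nstar (i, m) by rewrite E'.
  exact: nZ Z.
pose d x := if pselect (R x) is left _ then d' (x, None) else d' (x, Some nstar).
exists d; split.
- apply/continuousP => U oU; apply: open_ptwise => x /= Ux.
  have oU' : dop R (d' @^-1` U) by move/continuousP: cd'; apply.
  case: (pselect (R x)) => Rx.
  + have dx : d x = d' (x, None) by rewrite /d; case: pselect.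
    rewrite dx in Ux.
    have [U1 [N [oU1 oN U1x NN HU]]] := oU' (x, None) Ux (fun _ => Rx).
    have [S [smS HS]] := oN NN.
    have G : good x U S.
      exists U1; split=> // q Pq U1q [E|[n [E nS]]]; apply: HU => //; rewrite E //; exact: HS.
    have [U2 [oU2 U2x H2]] := Sof_good (x, U) (ex_intro _ S (conj smS G)).
    exists U2; split=> // x' U2x' /=.
    rewrite /d; case: pselect => Rx'.
      by apply: H2 => //=; left.
    apply: H2 => //=; right; exists nstar; split=> //; exact: (nsP (x, U)).
  + have dx : d x = d' (x, Some nstar) by rewrite /d; case: pselect.
    rewrite dx in Ux.
    have [U1 [N [oU1 oN U1x Ns HU]]] := oU' (x, Some nstar) Ux (fun E => ltac:(done)).
    exists (U1 `&` ~` R); split.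
    * by apply: openI => //; exact: closed_openC.
    * by split.
    * move=> x' [U1x' nRx'] /=; rewrite /d; case: pselect => // _.
      by apply: HU.
- apply/funext => a /=; rewrite /d; case: pselect => [_|nR].
    exact: (congr1 (fun F => F a) d'g).
  by exfalso; apply: nR; exists a.
- apply/funext => x /=; rewrite /d; case: pselect => _.
    exact: (congr1 (fun F => F (x, None)) hd').
  exact: (congr1 (fun F => F (x, Some nstar)) hd').
Qed.

Lemma CE_iff_M (A B : topologicalType) (f : A -> B) :
  @lorth (single Mmap) A B f <-> @closed_embedding A B f.
Proof.
split.
  by move=> /single_l [cf L]; exact: liftsM_CE.
move=> CEf; apply/single_l; split; first by case: CEf.
exact: CE_liftsM.
Qed.

Lemma CE_iff_k (A B : topologicalType) (f : A -> B) :
  @rorth (lorth (single kmap)) A B f <-> @closed_embedding A B f.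
Proof.
split.
  move=> [cg H]; apply: lifts_dense_CE => // A' B' f' cf' df'; apply: H.
  by apply/single_l; split => //; exact: dense_lifts_k.
move=> CEf; split; first by case: CEf.
move=> A' B' f' /single_l [cf' Lk]; apply: CE_lifts_dense => //.
exact: lifts_k_dense.
Qed.

Theorem mainTheorem15 :
  same_class (lorth (rorth (rorth (lorth (lorth (rorth (single iota_map)))))))
             (lorth (single Mmap)) /\
  same_class (lorth (single Mmap)) (rorth (lorth (single kmap))) /\
  same_class (rorth (lorth (single kmap))) closed_embedding.
Proof.
split; [|split] => A B f.
- rewrite CE_iff_M; split; [exact: C1|exact: C2].
- by rewrite CE_iff_M CE_iff_k.
- exact: CE_iff_k.
Qed.
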